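(* Let $s\ge 4$ be a perfect square and $E=\mathbb{R}^{s\times s\times s}$. Let $C_1,\dots,C_5\subset E$ be the Sudoku constraint sets defined in the context, and assume $C_1\cap\dots\cap C_5\neq\emptyset$. Let $z_{1,0},\dots,z_{5,0}\in E$ and consider the product-space Douglas--Rachford iteration \[ x_{k+1}=\tfrac15\sum_{i=1}^5 z_{i,k},\qquad u_{i,k+1}\in P_{C_i}(2x_{k+1}-z_{i,k}),\qquad z_{i,k+1}=z_{i,k}+u_{i,k+1}-x_{k+1}\quad(i=1,\dots,5). \] Write $\mathbf{z}_k=(z_{1,k},\dots,z_{5,k})$, $\mathbf{u}_k=(u_{1,k},\dots,u_{5,k})$. Assume the iteration converges: $\mathbf{z}_k\to\mathbf{z}^\star=(z_1^\star,\dots,z_5^\star)$, $x_k\to x^\star$ and $u_{i,k}\to x^\star$ for each $i$, where $x^\star=\tfrac15\sum_{i=1}^5 z_i^\star$. Suppose moreover that for $i=1,\dots,4$, $C_i$ is prox-regular at $x^\star$ for $x^\star-z_i^\star$ and \[ x^\star-z_i^\star\in\operatorname{int}\big(N_{C_i}(x^\star)\big). \] Then for all $k$ large enough $u_{i,k}=x^\star$ for $i=1,\dots,4$, and $\|\mathbf{z}_k-\mathbf{z}^\star\|=O(\eta^k)$ with $\eta=\frac{\sqrt5}{5}$ (norm on $E^5$ is the Euclidean product norm).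
   Context: Entries of $x\in E$ are $x(i,j,k)$, $i,j,k\in\{1,\dots,s\}$. Let $\mathcal{E}=\{e_1,\dots,e_s\}$ be the standard basis vectors of $\mathbb{R}^s$. $C_1=\{x: x(\cdot,j,k)\in\mathcal{E}\ \forall j,k\}$; $C_2=\{x: x(i,\cdot,k)\in\mathcal{E}\ \forall i,k\}$; $C_3=\{x: x(i,j,\cdot)\in\mathcal{E}\ \forall i,j\}$; $C_4=\{x:$ for every $k$ and every $a,b\in\{1,\dots,\sqrt s\}$, the $\sqrt s\times\sqrt s$ block $\big(x(i,j,k)\big)_{i\in\{\sqrt s(a-1)+1,\dots,\sqrt s a\},\, j\in\{\sqrt s(b-1)+1,\dots,\sqrt s b\}}$, viewed as a vector in $\mathbb{R}^s$, lies in $\mathcal{E}\}$; $C_5=\{x: x(i,j,k)=g(i,j,k)\ \forall (i,j,k)\in\Omega\}$ for a given index set $\Omega$ and given values $g$ (encoding the provided clues). For non-empty $C$, $P_C(x)=\{y\in C:\|x-y\|=\operatorname{dist}(x,C)\}$. $C$ is prox-regular at $x\in C$ for $v$ if $P_C(x+v)=\{x\}$. The proximal normal cone is $N^P_C(x)=\operatorname{cone}(P_C^{-1}(x)-x)$; the limiting normal cone $N_C(x)$ is the set of all limits of $v_k\in N^P_C(x_k)$ with $x_k\in C$, $x_k\to x$. $\operatorname{int}$ denotes interior. *)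

(* Defs.v *)
From HB Require Import structures.
From mathcomp Require Import all_boot all_order all_algebra.
From mathcomp Require Import all_classical all_reals.
Set Implicit Arguments. Unset Strict Implicit. Unset Printing Implicit Defensive.
Import Order.TTheory GRing.Theory Num.Theory.
Local Open Scope ring_scope.
Local Open Scope classical_set_scope.

(* Index set {1..s}^3, 0-based: (i, j, k) *)
Definition idx (s : nat) := ('I_s * 'I_s * 'I_s)%type.

Definition E (R : realType) (s : nat) := {ffun idx s -> R}.

Definition scaleE (R : realType) (s : nat) (l : R) (x : E R s) : E R s :=
  [ffun p => l * x p].

Definition enorm (R : realType) (s : nat) (x : E R s) : R :=
  Num.sqrt (\sum_(p : idx s) (x p) ^+ 2).

Definition norm5 (R : realType) (s : nat) (z : 'I_5 -> E R s) : R :=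
  Num.sqrt (\sum_(i < 5) (enorm (z i)) ^+ 2).

Definition cvgE (R : realType) (s : nat) (u : nat -> E R s) (l : E R s) :=
  forall e : R, 0 < e -> exists N, forall k, (N <= k)%N -> enorm (u k - l) < e.
Definition cvg5 (R : realType) (s : nat) (u : nat -> 'I_5 -> E R s)
  (l : 'I_5 -> E R s) :=
  forall e : R, 0 < e -> exists N, forall k, (N <= k)%N ->
    norm5 (fun i => u k i - l i) < e.

Definition is_std (R : realType) (n : nat) (v : 'I_n -> R) :=
  exists i0 : 'I_n, forall i, v i = if i == i0 then 1 else 0.

Definition C1 (R : realType) (s : nat) : set (E R s) :=
  [set x | forall j k : 'I_s, is_std (fun i => x (i, j, k))].
Definition C2 (R : realType) (s : nat) : set (E R s) :=
  [set x | forall i k : 'I_s, is_std (fun j => x (i, j, k))].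
Definition C3 (R : realType) (s : nat) : set (E R s) :=
  [set x | forall i j : 'I_s, is_std (fun k => x (i, j, k))].
(* m = sqrt s; block (a,b) = rows i with i %/ m = a, columns j with j %/ m = b;
   the block (an m x m array = a vector of R^s) is a standard basis vector iff
   exactly one position (r,t) carries 1 and all others 0. *)
Definition C4 (R : realType) (s m : nat) : set (E R s) :=
  [set x | forall (k : 'I_s) (a b : 'I_m), exists r t : 'I_m,
     forall i j : 'I_s, (i %/ m)%N = a -> (j %/ m)%N = b ->
       x (i, j, k) = if ((i %% m)%N == r) && ((j %% m)%N == t) then 1 else 0].
Definition C5 (R : realType) (s : nat) (Om : set (idx s)) (g : idx s -> R)
  : set (E R s) := [set x | forall p, Om p -> x p = g p].

Definition sudokuC (R : realType) (s m : nat) (Om : set (idx s)) (g : idx s -> R)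
  (i : 'I_5) : set (E R s) :=
  match val i with
  | 0 => @C1 R s | 1 => @C2 R s | 2 => @C3 R s | 3 => @C4 R s m | _ => C5 Om g
  end.

Definition distE (R : realType) (s : nat) (C : set (E R s)) (x : E R s) : R :=
  inf [set enorm (x - y) | y in C].
Definition projE (R : realType) (s : nat) (C : set (E R s)) (x : E R s)
  : set (E R s) := [set y | C y /\ enorm (x - y) = distE C x].

Definition prox_regular (R : realType) (s : nat) (C : set (E R s)) (x v : E R s) :=
  C x /\ projE C (x + v) = [set x].

Definition prox_normal (R : realType) (s : nat) (C : set (E R s)) (x : E R s)
  : set (E R s) :=
  [set v | exists (l : R) (y : E R s), 0 <= l /\ projE C y x /\ v = scaleE l (y - x)].

Definition lim_normal (R : realType) (s : nat) (C : set (E R s)) (x : E R s)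
  : set (E R s) :=
  [set v | exists (xs vs : nat -> E R s),
     (forall k, C (xs k)) /\ (forall k, prox_normal C (xs k) (vs k)) /\
     cvgE xs x /\ cvgE vs v].

Definition interiorE (R : realType) (s : nat) (A : set (E R s)) : set (E R s) :=
  [set v | exists e : R, 0 < e /\ forall w, enorm (w - v) < e -> A w].

(* Main.v *)
Require Import Defs.
From HB Require Import structures.
From mathcomp Require Import all_boot all_order all_algebra.
From mathcomp Require Import all_classical all_reals.
From mathcomp Require Import ring lra zify.
Set Implicit Arguments. Unset Strict Implicit. Unset Printing Implicit Defensive.
Import Order.TTheory GRing.Theory Num.Theory.
Local Open Scope ring_scope.
Local Open Scope classical_set_scope.

Definition o5 (n : nat) (h : (n < 5)%N) : 'I_5 := Ordinal h.
Lemma sum5 (R : realFieldType) (F : 'I_5 -> R) :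
  \sum_(i < 5) F i = F (@o5 0 isT) + F (@o5 1 isT) + F (@o5 2 isT) + F (@o5 3 isT) + F (@o5 4 isT).
Proof.
rewrite !big_ord_recl big_ord0 addr0 !addrA.
do 5? (congr (_ + _)); congr F; exact: val_inj.
Qed.

Section Aux.
Variables (R : realType) (s : nat).

Lemma entry_sq_le (v : E R s) p : v p ^+ 2 <= \sum_q v q ^+ 2.
Proof.
rewrite (bigD1 p) //= lerDl; apply: sumr_ge0 => q _; exact: sqr_ge0.
Qed.

Lemma entry_le (v : E R s) p : `|v p| <= enorm v.
Proof.
rewrite /enorm -sqrtr_sqr ler_sqrt ?entry_sq_le //.
apply: sumr_ge0 => q _; exact: sqr_ge0.
Qed.

Lemma enorm_ge0 (v : E R s) : 0 <= enorm v.
Proof. exact: sqrtr_ge0. Qed.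

Lemma enorm_le5 (z : 'I_5 -> E R s) i : enorm (z i) <= norm5 z.
Proof.
rewrite /norm5 -[enorm (z i)]ger0_norm ?enorm_ge0 // -sqrtr_sqr ler_sqrt.
  rewrite (bigD1 i) //= lerDl; apply: sumr_ge0 => q _; exact: sqr_ge0.
apply: sumr_ge0 => q _; exact: sqr_ge0.
Qed.

Definition cv (a : nat -> R) l := forall e : R, 0 < e ->
  exists N, forall k, (N <= k)%N -> `|a k - l| < e.

Lemma cvE_entry (u : nat -> E R s) l p : cvgE u l -> cv (fun k => u k p) (l p).
Proof.
move=> H e e0; have [N HN] := H e e0; exists N => k /HN.
apply: le_lt_trans; have := entry_le (u k - l) p; by rewrite !ffunE.
Qed.

Lemma cv5_entry (z : nat -> 'I_5 -> E R s) zs i p :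
  cvg5 z zs -> cv (fun k => z k i p) (zs i p).
Proof.
move=> H e e0; have [N HN] := H e e0; exists N => k /HN.
apply: le_lt_trans; apply: le_trans (enorm_le5 (fun i => z k i - zs i) i).
have := entry_le (z k i - zs i) p; by rewrite !ffunE.
Qed.

Lemma cv_uniq (a b : nat -> R) l l' M : cv a l -> cv b l' ->
  (forall k, (M <= k)%N -> a k = b k) -> l = l'.
Proof.
move=> Ha Hb Hab; apply/eqP; apply/negPn/negP => Hne.
have d0 : 0 < `|l - l'| by rewrite normr_gt0 subr_eq0.
have e0 : 0 < `|l - l'| / 2 by rewrite divr_gt0.
have [N1 H1] := Ha _ e0; have [N2 H2] := Hb _ e0.
pose k := (N1 + N2 + M)%N.
have h1 := H1 k (leq_trans (leq_addr N2 N1) (leq_addr _ _)).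
have h2 := H2 k (leq_trans (leq_addl N1 N2) (leq_addr _ _)).
rewrite Hab ?leq_addl // in h1.
have := ler_distD (b k) l l'.
rewrite (distrC l (b k)); lra.
Qed.

Lemma cv_lin (e : nat -> R) al be c : cv e 0 ->
  cv (fun k => c + (al * e k.+1 + be * e k)) c.
Proof.
move=> H eps eps0.
have d0 : 0 < `|al| + `|be| + 1 by rewrite ltr_wpDl ?addr_ge0.
have [N HN] := H (eps / (`|al| + `|be| + 1)) (divr_gt0 eps0 d0).
exists N => k Hk.
have h1 := HN _ (leqW Hk); have h0 := HN _ Hk.
rewrite subr0 in h1; rewrite subr0 in h0.
rewrite [c + _]addrC addrK.
apply: le_lt_trans (ler_normD _ _) _.
rewrite !normrM.
have hA : `|al| * `|e k.+1| <= `|al| * (eps / (`|al| + `|be| + 1)).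
  by rewrite ler_wpM2l // ltW.
have hB : `|be| * `|e k| <= `|be| * (eps / (`|al| + `|be| + 1)).
  by rewrite ler_wpM2l // ltW.
have key : (`|al| + `|be|) * (eps / (`|al| + `|be| + 1)) < eps.
  rewrite mulrA ltr_pdivrMr // [X in _ < X]mulrC ltr_pM2r //.
  by rewrite ltrDl ltr01.
rewrite mulrDl in key; lra.
Qed.
End Aux.
Lemma if01 (R : realType) (b : bool) : ((if b then 1 else 0) = 0 :> R) \/ (if b then 1 else 0) = 1 :> R.
Proof. by case: b; [right|left]. Qed.

Lemma sudoku01 (R : realType) s m Om (g : idx s -> R) (i : 'I_5) (v : E R s) :
  s = (m * m)%N -> (val i < 4)%N -> sudokuC m Om g i v ->
  forall p, v p = 0 \/ v p = 1.
Proof.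
move=> hs; case: i => [n Hn] /= Hi; rewrite /sudokuC /=.
move=> H [[a b] c].
case: n Hn Hi H => [|[|[|[|n]]]] // _ _ H.
- by have [i0 ->] := H b c; apply: if01.
- by have [i0 ->] := H a c; apply: if01.
- by have [i0 ->] := H a b; apply: if01.
- have m0 : (0 < m)%N.
    rewrite lt0n; apply/negP => /eqP m0; have := ltn_ord a; move: (nat_of_ord a) => a'; by rewrite hs m0.
  have ha : (a %/ m < m)%N by rewrite ltn_divLR // -hs.
  have hb : (b %/ m < m)%N by rewrite ltn_divLR // -hs.
  have [r [t Ht]] := H c (Ordinal ha) (Ordinal hb).
  by rewrite Ht //; apply: if01.
Qed.

Lemma projC5 (R : realType) s Om (g : idx s -> R) (y w : E R s) :
  projE (C5 Om g) y w -> forall p, ~ Om p -> w p = y p.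
Proof.
move=> [Cw Hw] p Hp.
pose w' : E R s := [ffun q => if q == p then y p else w q].
have Cw' : C5 Om g w'.
  move=> q Hq; rewrite ffunE; case: eqP => [E|_]; last exact: Cw.
  by subst q.
have hle : enorm (y - w) <= enorm (y - w').
  rewrite Hw /distE; apply: inf_lbound.
  - exists 0 => r [q _ <-]; exact: enorm_ge0.
  - by exists w'.
move: hle; rewrite /enorm ler_sqrt; last first.
  by apply: sumr_ge0 => q _; apply: sqr_ge0.
rewrite (bigD1 p) //= [X in _ <= X](bigD1 p) //= /w' !ffunE eqxx subrr expr0n /= add0r.
have -> : \sum_(i | i != p) (y - [ffun q => if q == p then y p else w q]) i ^+ 2 = \sum_(i | i != p) (y - w) i ^+ 2.
  by apply: eq_bigr => q /negPf hq; rewrite /w' !ffunE hq.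
rewrite gerDr => h.
have : (y p - w p) ^+ 2 = 0 by apply/eqP; rewrite eq_le h sqr_ge0.
by move/eqP; rewrite sqrf_eq0 subr_eq0 => /eqP.
Qed.

Section Entry.
Variable R : realType.
Local Notation i4 := (@o5 4 isT).

Lemma cv_const (c : R) : cv (fun _ => c) c.
Proof. by move=> e e0; exists 0%N => k _; rewrite subrr normr0. Qed.

Lemma not4 (i : 'I_5) : ~~ (val i < 4)%N -> i = i4.
Proof. case: i => [n hn] /= h; apply: val_inj => /=; lia. Qed.

Lemma entry_nonOm (xe : nat -> R) (ze : nat -> 'I_5 -> R) (xsp : R)
  (zsp : 'I_5 -> R) N : (0 < N)%N ->
  (forall k, xe k.+1 = 5%:R^-1 * \sum_(i < 5) ze k i) ->
  (forall k, ze k.+1 i4 = xe k.+1) ->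
  (forall k i, (N <= k.+1)%N -> (val i < 4)%N -> ze k.+1 i = ze k i + xsp - xe k.+1) ->
  cv xe xsp -> (forall i, cv (fun k => ze k i) (zsp i)) ->
  exists D, 0 <= D /\ forall k, (N <= k)%N -> forall i,
    (ze k i - zsp i) ^+ 2 <= D * (5%:R^-1) ^+ k.
Proof.
move=> N0 Hx Z4 Zi Cx Cz.
have Z4' : forall k, (0 < k)%N -> ze k i4 = xe k by case.
have Rec : forall k, (N <= k)%N -> xe k.+2 = (2%:R * xe k.+1 - xe k + 4%:R * xsp) / 5%:R.
  move=> k Hk; have k0 : (0 < k)%N by lia.
  have h1 := Hx k; have h2 := Z4' k k0; have h3 := Hx k.+1.
  rewrite sum5 in h1; rewrite sum5 in h3.
  rewrite Z4 !Zi // in h3; try lia.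
  lra.
pose e k := xe k - xsp.
pose Q k := e k.+1 ^+ 2 - 2%:R / 5%:R * e k.+1 * e k + 5%:R^-1 * e k ^+ 2.
have Qrec : forall k, (N <= k)%N -> Q k.+1 = Q k / 5%:R.
  move=> k Hk; rewrite /Q /e Rec //.
  by field.
have QT : forall k, (N <= k)%N -> Q k * 5%:R ^+ k = Q N * 5%:R ^+ N.
  elim=> [|k IH] Hk; first by have -> : N = 0%N by lia.
  move: Hk; rewrite leq_eqVlt => /orP [/eqP <- // | Hk].
  rewrite Qrec // exprS -(IH Hk).
  by field.
have Qb : forall k, 0 <= Q k /\ e k.+1 ^+2 <= 34%:R * Q k /\ e k ^+2 <= 34%:R * Q k /\
   (5%:R/4%:R * e k.+1 - 4%:R^-1 * e k) ^+ 2 <= 34%:R * Q k.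
  move=> k; rewrite /Q.
  split; [nra|split; [nra|split; nra]].
have QE : forall k, (N <= k)%N -> 34%:R * Q k = 34%:R * (Q N * 5%:R ^+ N) * (5%:R^-1) ^+ k.
  move=> k Hk; rewrite -(QT k Hk) exprVn.
  by field; rewrite expf_neq0 // pnatr_eq0.
have e0 : cv e 0.
  by move=> eps eps0; have [M HM] := Cx eps eps0; exists M => k /HM; rewrite subr0.
exists (34%:R * (Q N * 5%:R ^+ N)); split.
  apply: mulr_ge0 => //; apply: mulr_ge0; [exact: (Qb N).1 | exact: exprn_ge0].
have Zc : forall i, (val i < 4)%N -> forall k, (N <= k)%N ->
    ze k i = (ze N i - (5%:R/4%:R * e N.+1 - 4%:R^-1 * e N)) + (5%:R/4%:R * e k.+1 + (- 4%:R^-1) * e k).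
  move=> i Hi; elim=> [|k IH] Hk; first by rewrite leqn0 in Hk; rewrite (eqP Hk) in N0.
  move: Hk; rewrite leq_eqVlt => /orP [/eqP E | Hk].
    by rewrite -E; lra.
  have h1 := IH Hk; have h2 := Zi k i (ltnW Hk) Hi; have h3 := Rec k Hk.
  rewrite /e in h1 *; lra.
have Zs : forall i, (val i < 4)%N -> zsp i = ze N i - (5%:R/4%:R * e N.+1 - 4%:R^-1 * e N).
  move=> i Hi; apply: (cv_uniq (Cz i) (cv_lin _ _ _ e0) (M := N)).
  exact: Zc.
have Z4s : zsp i4 = xsp.
  by apply: (cv_uniq (Cz i4) Cx (M := 1%N)) => k; apply: Z4'.
move=> k Hk i; rewrite -QE //.
case: (boolP (val i < 4)%N) => Hi.
  rewrite (Zs i Hi) (Zc i Hi k Hk).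
  have -> : ze N i - (5%:R / 4%:R * e N.+1 - 4%:R^-1 * e N) +
     (5%:R / 4%:R * e k.+1 + - 4%:R^-1 * e k) -
     (ze N i - (5%:R / 4%:R * e N.+1 - 4%:R^-1 * e N)) = 5%:R / 4%:R * e k.+1 - 4%:R^-1 * e k by ring.
  by have [_ [_ [_ ->]]] := Qb k.
rewrite (not4 Hi) Z4s Z4'; last by lia.
by have [_ [_ [->]]] := Qb k.
Qed.

Lemma entry_Om (xe : nat -> R) (ze : nat -> 'I_5 -> R) (xsp gp : R)
  (zsp : 'I_5 -> R) N :
  (forall k, xe k.+1 = 5%:R^-1 * \sum_(i < 5) ze k i) ->
  (forall k, ze k.+1 i4 = ze k i4 + gp - xe k.+1) ->
  (forall k i, (N <= k.+1)%N -> (val i < 4)%N -> ze k.+1 i = ze k i + xsp - xe k.+1) ->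
  cv xe xsp -> (forall i, cv (fun k => ze k i) (zsp i)) ->
  forall k, (N.+2 <= k)%N -> forall i, ze k i - zsp i = 0.
Proof.
move=> Hx Z4 Zi Cx Cz.
have X : forall k, (N <= k)%N -> xe k.+2 = (4%:R * xsp + gp) / 5%:R.
  move=> k Hk.
  have h1 := Hx k; have h3 := Hx k.+1.
  rewrite sum5 in h1; rewrite sum5 in h3.
  rewrite Z4 !Zi // in h3; try lia.
  lra.
have Hxs : xsp = (4%:R * xsp + gp) / 5%:R.
  apply: (cv_uniq Cx (cv_const _) (M := N.+2)).
  by case=> [|[|k]] // Hk; apply: X.
have Xe : forall j, (N.+2 <= j)%N -> xe j = xsp.
  by case=> [|[|j]] // Hj; rewrite X // -Hxs.
have Zc : forall i k, (N.+2 <= k)%N -> ze k i = ze N.+2 i.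
  move=> i; elim=> [|k IH] Hk //.
  move: Hk; rewrite leq_eqVlt => /orP [/eqP <- // | Hk].
  rewrite -(IH Hk).
  have hx := Xe k.+1 (ltnW Hk).
  case: (boolP (val i < 4)%N) => Hi.
    rewrite Zi //; last by lia.
    lra.
  rewrite (not4 Hi) Z4; lra.
move=> k Hk i.
rewrite (Zc i k Hk) (cv_uniq (Cz i) (cv_const (ze N.+2 i)) (M := N.+2)) ?subrr //.
exact: Zc.
Qed.
End Entry.

Local Notation i4 := (@o5 4 isT).
Unset Implicit Arguments.

Theorem proposition4p4 (R : realType) (s m : nat) (hs : s = (m * m)%N)
  (h4 : (4 <= s)%N) (Om : set (idx s)) (g : idx s -> R)
  (x : nat -> E R s) (u z : nat -> 'I_5 -> E R s) (zs : 'I_5 -> E R s) :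
  (exists y, forall i, sudokuC m Om g i y) ->
  (forall k, x k.+1 = scaleE 5%:R^-1 (\sum_(i < 5) z k i)) ->
  (forall k i, projE (sudokuC m Om g i) (scaleE 2%:R (x k.+1) - z k i) (u k.+1 i)) ->
  (forall k i, z k.+1 i = z k i + u k.+1 i - x k.+1) ->
  let xs := scaleE 5%:R^-1 (\sum_(i < 5) zs i) in
  cvg5 z zs -> cvgE x xs -> (forall i, cvgE (fun k => u k i) xs) ->
  (forall i : 'I_5, (val i < 4)%N ->
     prox_regular (sudokuC m Om g i) xs (xs - zs i) /\
     interiorE (lim_normal (sudokuC m Om g i) xs) (xs - zs i)) ->
  exists (K : nat) (c : R), forall k, (K <= k)%N ->
    (forall i : 'I_5, (val i < 4)%N -> u k i = xs) /\
    norm5 (fun i => z k i - zs i) <= c * (Num.sqrt 5%:R / 5%:R) ^+ k.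
Proof.
move=> _ Hx Hu Hz xs Hcz Hcx Hcu _.
have Hev : forall i : 'I_5, exists N, forall k, (N <= k)%N -> (val i < 4)%N -> u k i = xs.
  move=> i; case: (boolP (val i < 4)%N) => Hi; last first.
    by exists 0%N => k _ h; case/negP: Hi.
  have h01 : forall k p, (0 < k)%N -> u k i p = 0 \/ u k i p = 1.
    case=> // k' p _; exact: (sudoku01 hs Hi (Hu k' i).1 p).
  have h2 : (0:R) < 2%:R^-1 by rewrite invr_gt0 ltr0n.
  have [N0 HN0] := Hcu i (2%:R^-1) h2.
  have hb : forall k p, (N0 <= k)%N -> `|u k i p - xs p| < 2%:R^-1.
    move=> k p Hk; have := HN0 _ Hk; apply: le_lt_trans.
    have := entry_le (u k i - xs) p; by rewrite !ffunE.
  have ukb : forall p k, (N0.+1 <= k)%N -> u k i p = u N0.+1 i p.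
    move=> p k Hk.
    have := hb _ p (ltnW Hk); have := hb _ p (leqnSn N0).
    rewrite !ltr_norml => /andP[hb1 hb2] /andP[hk1 hk2].
    case: (h01 k p (leq_trans (ltn0Sn _) Hk)) => ha;
    case: (h01 N0.+1 p isT) => hc; lra.
  exists N0.+1 => k Hk _; apply/ffunP => p.
  have := cv_uniq (cvE_entry p (Hcu i)) (cv_const (u N0.+1 i p)) (M := N0.+1) (ukb p).
  by move=> ->; apply: ukb.
have [f Hf] := choice Hev.
pose N := (\max_(i < 5) f i)%N.+1.
have HU : forall k i, (N <= k)%N -> (val i < 4)%N -> u k i = xs.
  move=> k i Hk Hi; apply: Hf Hi.
  exact: leq_trans (leq_bigmax i) (leq_trans (leqnSn _) Hk).
have Hent : forall p, exists D, 0 <= D /\ forall k, (N.+2 <= k)%N -> forall i,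
    (z k i p - zs i p) ^+ 2 <= D * (5%:R^-1) ^+ k.
  move=> p.
  have Hxe : forall k, x k.+1 p = 5%:R^-1 * \sum_(i < 5) z k i p.
    by move=> k; rewrite Hx ffunE sum_ffunE.
  have Zi : forall k i, (N <= k.+1)%N -> (val i < 4)%N ->
      z k.+1 i p = z k i p + xs p - x k.+1 p.
    by move=> k i Hk Hi; rewrite Hz HU // !ffunE.
  have Cx := cvE_entry p Hcx.
  have Cz := fun i => cv5_entry i p Hcz.
  case: (pselect (Om p)) => Hp.
    have Z4 : forall k, z k.+1 i4 p = z k i4 p + g p - x k.+1 p.
      move=> k; have := (Hu k i4).1; rewrite /sudokuC /= => C.
      by rewrite Hz !ffunE (C p Hp).
    exists 0; split => // k Hk i.
    rewrite (@entry_Om R (fun k => x k p) (fun k i => z k i p) (xs p) (g p)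
       (fun i => zs i p) N Hxe Z4 Zi Cx Cz k Hk i).
    by rewrite expr0n mul0r.
  have Z4 : forall k, z k.+1 i4 p = x k.+1 p.
    move=> k; rewrite Hz !ffunE (projC5 (Hu k i4) Hp) !ffunE; lra.
  have [D [D0 HD]] := @entry_nonOm R (fun k => x k p) (fun k i => z k i p) (xs p)
       (fun i => zs i p) N isT Hxe Z4 Zi Cx Cz.
  exists D; split => // k Hk i; apply: HD; exact: leq_trans (leqnSn _) (ltnW Hk).
have [D HD] := choice Hent.
exists N.+2, (Num.sqrt (5%:R * \sum_p D p)) => k Hk; split.
  by move=> i Hi; apply: HU => //; exact: leq_trans (leqnSn _) (ltnW Hk).
have eta0 : 0 <= Num.sqrt 5%:R / 5%:R :> R by rewrite divr_ge0 ?sqrtr_ge0.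
have eta2 : (Num.sqrt 5%:R / 5%:R) ^+ 2 = 5%:R^-1 :> R.
  rewrite expr_div_n sqr_sqrtr ?ler0n //; by field.
have Hsum : \sum_(i < 5) enorm (z k i - zs i) ^+ 2 <=
    (5%:R * \sum_p D p) * ((Num.sqrt 5%:R / 5%:R) ^+ k) ^+ 2.
  rewrite -exprM mulnC exprM eta2.
  have -> : (5%:R * \sum_p D p) * 5%:R^-1 ^+ k =
      \sum_(i < 5) \sum_p (D p * 5%:R^-1 ^+ k).
    rewrite sum5 -mulr_suml; ring.
  apply: ler_sum => i _.
  rewrite /enorm sqr_sqrtr; last by apply: sumr_ge0 => q _; exact: sqr_ge0.
  apply: ler_sum => q _; rewrite !ffunE.
  exact: ((HD q).2 k Hk i).
rewrite /norm5.
apply: le_trans (_ : Num.sqrt ((5%:R * \sum_p D p) * ((Num.sqrt 5%:R / 5%:R) ^+ k) ^+ 2) <= _).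
  rewrite ler_sqrt //; apply: mulr_ge0; last exact: sqr_ge0.
  by apply: mulr_ge0 => //; apply: sumr_ge0 => q _; exact: (HD q).1.
rewrite sqrtrM; last first.
  by apply: mulr_ge0 => //; apply: sumr_ge0 => q _; exact: (HD q).1.
by rewrite sqrtr_sqr ger0_norm // exprn_ge0.
Qed.
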